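(* Let $\Gamma\in\mathcal S$ with embedding $\varphi$, and let $\Gamma_1,\Gamma_2\subset\Gamma$ be disjoint connected subtrees. Then for at least one $k\in\{1,2\}$ the vector $w_k=\sum_{v\in\Gamma_k}\varphi(v)$ is of the form $E_a-\sum_{j\in J}E_j$ with $a\notin J$.
   Context: A plumbing tree is a finite tree $\Gamma$ each of whose vertices $v$ carries an integer decoration $d(v)$. $\Gamma$ is minimal if no vertex has decoration $-1$. For $n\ge 1$ let $(\mathbb Z^n,Q_n)$ be the lattice with basis $E_1,\dots,E_n$ and $Q_n(E_i,E_j)=-\delta_{ij}$, and let $K=\sum_{i=1}^n E_i$. A plumbing tree $\Gamma$ on $n$ vertices is a symplectic plumbing tree if there is a map $\varphi$ (an embedding) from its vertex set to $\mathbb Z^n$ such that: for distinct vertices $v_1,v_2$, $Q_n(\varphi(v_1),\varphi(v_2))$ is $1$ if they are adjacent and $0$ otherwise; $Q_n(\varphi(v),\varphi(v))=d(v)$ for every $v$; and $Q_n(\varphi(v),K)+Q_n(\varphi(v),\varphi(v))=-2$ for every $v$. $\mathcal S$ is the set of minimal, connected symplectic plumbing trees. *)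

(* Defs.v *)
From mathcomp Require Import all_boot all_order all_algebra.
Set Implicit Arguments. Unset Strict Implicit. Unset Printing Implicit Defensive.
Import Order.TTheory GRing.Theory Num.Theory.
Local Open Scope ring_scope.

Definition lvec (n : nat) := {ffun 'I_n -> int}.

Definition Qn (n : nat) (x y : lvec n) : int := - \sum_(i < n) x i * y i.

Definition Ebas (n : nat) (i : 'I_n) : lvec n := [ffun j => ((j == i) : nat)%:Z].

Definition Kvec (n : nat) : lvec n := \sum_(i < n) Ebas i.

(* A finite simple graph on the finType V given by an adjacency relation e
   is a tree: nonempty, e symmetric and irreflexive, connected, and with
   exactly #|V| - 1 (undirected) edges. *)
Definition is_tree (V : finType) (e : rel V) : Prop :=
  [/\ (0 < #|V|)%N, symmetric e, irreflexive e,
      (forall x y : V, connect e x y) &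
      #|[set p : V * V | e p.1 p.2]| = (2 * (#|V| - 1))%N].

Definition minimal_dec (V : finType) (d : V -> int) : Prop :=
  forall v, d v != -1.

Definition symplectic_embedding (V : finType) (e : rel V) (d : V -> int)
    (n : nat) (phi : V -> lvec n) : Prop :=
  [/\ forall v1 v2, v1 != v2 -> Qn (phi v1) (phi v2) = (if e v1 v2 then 1 else 0),
      forall v, Qn (phi v) (phi v) = d v &
      forall v, Qn (phi v) (Kvec n) + Qn (phi v) (phi v) = -2].

Definition connected_subtree (V : finType) (e : rel V) (S : {set V}) : Prop :=
  S != set0 /\
  forall x y, x \in S -> y \in S ->
    connect [rel a b | [&& e a b, a \in S & b \in S]] x y.

(* Main.v *)
Require Import Defs.
From mathcomp Require Import all_boot all_order all_algebra.
From mathcomp Require Import zify ring lra.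
Import Order.TTheory GRing.Theory Num.Theory.
Set Implicit Arguments. Unset Strict Implicit.
Local Open Scope ring_scope.

Section Alg.
Variable n : nat.
Implicit Types x y z : lvec n.

Lemma QnC x y : Qn x y = Qn y x.
Proof. rewrite /Qn; congr (- _); apply: eq_bigr => i _; exact: mulrC. Qed.

Lemma QnDl x y z : Qn (x + y) z = Qn x z + Qn y z.
Proof. rewrite /Qn -opprD -big_split /=; congr (- _); apply: eq_bigr => i _; rewrite ffunE mulrDl. done. Qed.

Lemma QnDr x y z : Qn z (x + y) = Qn z x + Qn z y.
Proof. by rewrite QnC QnDl !(QnC z). Qed.

Lemma Qn0l y : Qn 0 y = 0.
Proof. rewrite /Qn big1 ?oppr0 // => i _; by rewrite ffunE mul0r. Qed.

Lemma Qn_suml (I : finType) (P : pred I) (F : I -> lvec n) y :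
  Qn (\sum_(i | P i) F i) y = \sum_(i | P i) Qn (F i) y.
Proof.
elim/big_rec2: _ => [|i a b _ <-]; [exact: Qn0l | exact: QnDl].
Qed.

Lemma Qn_sumr (I : finType) (P : pred I) (F : I -> lvec n) y :
  Qn y (\sum_(i | P i) F i) = \sum_(i | P i) Qn y (F i).
Proof. rewrite QnC Qn_suml; apply: eq_bigr => i _; exact: QnC. Qed.

Lemma KvecE i : Kvec n i = 1.
Proof.
rewrite /Kvec sum_ffunE (bigD1 i) //= ffunE eqxx big1 ?addr0 // => j ji.
by rewrite ffunE eq_sym (negbTE ji).
Qed.

Definition hq x := Qn x x + Qn x (Kvec n).

Lemma hqE x : hq x = - \sum_(i < n) x i * (x i + 1).
Proof.
rewrite /hq /Qn -opprD -big_split /=; congr (- _); apply: eq_bigr => i _.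
have -> : Kvec n i = 1 by apply: KvecE.
by rewrite mulrDr mulr1.
Qed.

Lemma hq_add x y : hq (x + y) = hq x + hq y + 2 * Qn x y.
Proof. rewrite /hq !QnDl !QnDr (QnC y x). ring. Qed.

Lemma tpos (z : int) : 0 <= z * (z + 1).
Proof. case: (lerP 0 z) => ?; nia. Qed.

Lemma formA x : -2 <= hq x -> forall a, 0 < x a ->
  x a = 1 /\ forall j, j != a -> x j = 0 \/ x j = -1.
Proof.
rewrite hqE => H a Ha.
have Hs : \sum_(i < n) x i * (x i + 1) <= 2 by lia.
rewrite (bigD1 a) //= in Hs.
move: Hs; set S := (X in _ + X <= _) => Hs.
have Hr : 0 <= S by apply: sumr_ge0 => j _; apply: tpos.
have H2 : x a * (x a + 1) <= 2 by lia.
split; first by move: (x a) Ha H2 => z; nia.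
move=> j ja.
have Hj : x j * (x j + 1) <= 0.
  move: Hr Hs; rewrite /S (bigD1 j) //=.
  set S2 := (X in _ + X) => Hr Hs.
  have : 0 <= S2 by apply: sumr_ge0 => i _; apply: tpos.
  have := tpos (x a). lia.
move: (x j) Hj => z Hz; have : -1 <= z <= 0 by apply/andP; split; nia.
lia.
Qed.
End Alg.

Section Graph.
Variables (V : finType) (e : rel V) (n : nat) (phi : V -> lvec n).
Hypothesis se : symmetric e.
Hypothesis Hadj : forall v1 v2, v1 != v2 -> Qn (phi v1) (phi v2) = (if e v1 v2 then 1 else 0).
Hypothesis Hk : forall v, Qn (phi v) (Kvec n) + Qn (phi v) (phi v) = -2.

Definition wS (A : {set V}) : lvec n := \sum_(v in A) phi v.
Definition EE (A B : {set V}) : int := \sum_(u in A) \sum_(v in B) (if e u v then 1 else 0).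

Lemma hq_phi v : hq (phi v) = -2.
Proof. by rewrite /hq addrC Hk. Qed.

Lemma QnAB (A B : {set V}) : [disjoint A & B] -> Qn (wS A) (wS B) = EE A B.
Proof.
move=> dAB; rewrite /wS Qn_suml; apply: eq_bigr => u uA.
rewrite Qn_sumr; apply: eq_bigr => v vB; apply: Hadj.
apply/eqP => uv; subst v; by move: (disjointFr dAB uA); rewrite vB.
Qed.

Lemma EE_ge0 (A B : {set V}) : 0 <= EE A B.
Proof. apply: sumr_ge0 => u _; apply: sumr_ge0 => v _; by case: (e u v). Qed.

Lemma EE_ge1 (A B : {set V}) u v : u \in A -> v \in B -> e u v -> 1 <= EE A B.
Proof.
move=> uA vB euv; rewrite /EE (bigD1 u) //= (bigD1 v) //= euv.
rewrite -addrA lerDl; apply: addr_ge0.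
  by apply: sumr_ge0 => w _; case: (e u w).
by apply: sumr_ge0 => w _; apply: sumr_ge0 => z _; case: (e w z).
Qed.

Lemma cut (e' : rel V) (S T : {set V}) r y :
  symmetric e' -> (forall a b, e' a b -> e a b) ->
  (forall a b, e' a b -> a \in S -> b \in S) ->
  T \subset S -> r \in T -> y \in S -> y \notin T -> connect e' r y ->
  exists a b, [/\ a \in T, b \in S, b \notin T & e a b].
Proof.
move=> se' sub cl TS rT yS yT cry.
case: (boolP [exists a, exists b, [&& a \in T, b \in S, b \notin T & e a b]]).
  by move=> /existsP [a /existsP [b /and4P [? ? ? ?]]]; exists a, b.
rewrite negb_exists => /forallP Hn.
have H1 : forall a b, e' a b -> a \in T -> b \in T.
  move=> a b eab aT; have bS : b \in S by apply: (cl a b eab); apply: (subsetP TS).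
  apply/negPn/negP => bT.
  have := Hn a; rewrite negb_exists => /forallP /(_ b).
  by rewrite aT bS bT sub.
have Hcl : closed e' T.
  move=> a b eab; apply/idP/idP; first exact: H1.
  by apply: H1; rewrite se'.
by move: (closed_connect Hcl cry); rewrite rT (negbTE yT).
Qed.

Lemma grow (S : {set V}) r : r \in S ->
  (forall T : {set V}, r \in T -> T \subset S -> T != S ->
     exists a b, [/\ a \in T, b \in S, b \notin T & e a b]) ->
  -2 <= hq (wS S).
Proof.
move=> rS Hcut.
suff H : forall k, (1 <= k <= #|S|)%N ->
    exists T : {set V}, [/\ T \subset S, r \in T, #|T| = k & -2 <= hq (wS T)].
  have [|T [TS rT cT hT]] := H #|S|.
    by rewrite leqnn andbT; apply/card_gt0P; exists r.
  have -> : S = T by apply/eqP; rewrite eq_sym eqEcard TS cT leqnn.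
  done.
elim=> [//|k IH] /andP [_ Hkk].
case: k IH Hkk => [_ _ | k IH Hkk].
  exists [set r]; split; rewrite ?sub1set ?set11 ?cards1 //.
  by rewrite /wS big_set1 hq_phi.
have [|T [TS rT cT hT]] := IH.
  by apply/andP; split => //; apply: ltnW.
have TnS : T != S by apply/eqP => TS'; rewrite -TS' cT ltnn in Hkk.
have [a [b [aT bS bT eab]]] := Hcut T rT TS TnS.
exists (b |: T); split.
- by rewrite subUset sub1set bS TS.
- by rewrite in_setU1 rT orbT.
- by rewrite cardsU1 bT cT.
rewrite /wS big_setU1 //= hq_add hq_phi.
have dj : [disjoint [set b] & T] by rewrite disjoints1.
have := QnAB dj; rewrite /wS big_set1 => ->.
have := EE_ge1 (set11 b) aT; rewrite se => /(_ eab).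
move: hT; rewrite /wS.
set X := hq _; set Y := EE _ _ => h1 h2. lia.
Qed.

Lemma conn_hq (S : {set V}) (e' : rel V) r :
  symmetric e' -> (forall a b, e' a b -> e a b) ->
  (forall a b, e' a b -> a \in S -> b \in S) -> r \in S ->
  (forall y, y \in S -> connect e' r y) -> -2 <= hq (wS S).
Proof.
move=> se' sub cl rS cn; apply: (grow rS) => T rT TS TnS.
have [y] : exists y, y \in S :\: T.
  apply/set0Pn; rewrite setD_eq0; apply: contra TnS => ST.
  by rewrite eqEsubset TS ST.
rewrite inE => /andP [yT yS].
apply: (cut se' sub cl TS rT yS yT (cn y yS)).
Qed.


Definition eR (R : {set V}) : rel V := [rel a b | [&& e a b, a \in R & b \in R]].
Definition comp (R : {set V}) x : {set V} := [set y | connect (eR R) x y].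

Lemma eR_sym (R : {set V}) : symmetric (eR R).
Proof. move=> a b; rewrite /eR /= se; by case: (a \in R); case: (b \in R); rewrite ?andbF. Qed.

Lemma comp_hq (R : {set V}) x : -2 <= hq (wS (comp R x)).
Proof.
apply: (@conn_hq _ (eR R) x (eR_sym R)).
- by move=> a b /and3P [].
- move=> a b eab; rewrite !inE => xa; apply: connect_trans xa _; exact: connect1.
- by rewrite inE connect0.
- by move=> y; rewrite inE.
Qed.

Lemma comp_sub (R : {set V}) x : x \in R -> comp R x \subset R.
Proof.
move=> xR; apply/subsetP => y; rewrite inE => cxy.
have Hcl : closed (eR R) R by move=> a b /and3P [_ -> ->].
by rewrite -(closed_connect Hcl cxy).
Qed.

Lemma find_comp (G1 G2 : {set V}) g1 g2 :
  (forall x y, connect e x y) -> g1 \in G1 -> g2 \in G2 -> [disjoint G1 & G2] ->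
  (forall a b, a \in G1 -> b \in G2 -> ~~ e a b) ->
  exists x, [/\ x \in ~: (G1 :|: G2),
     exists a b, [/\ a \in comp (~: (G1 :|: G2)) x, b \in G1 & e a b] &
     exists a b, [/\ a \in comp (~: (G1 :|: G2)) x, b \in G2 & e a b]].
Proof.
move=> conn g1G g2G dj noE.
set R := ~: (G1 :|: G2).
pose adj x (G : {set V}) := [exists a, exists b, [&& a \in comp R x, b \in G & e a b]].
case: (boolP [exists x, [&& x \in R, adj x G1 & adj x G2]]).
  move=> /existsP [x /and3P [xR /existsP [a /existsP [b /and3P [? ? ?]]]
     /existsP [a' /existsP [b' /and3P [? ? ?]]]]].
  by exists x; split => //; [exists a, b | exists a', b'].
rewrite negb_exists => /forallP Hn.
have memR : forall y, (y \in R) = ~~ (y \in G1) && ~~ (y \in G2).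
  by move=> y; rewrite /R !inE negb_or.
set X := G1 :|: [set y | (y \in R) && adj y G1].
have memX : forall y, (y \in X) = (y \in G1) || ((y \in R) && adj y G1).
  by move=> y; rewrite /X in_setU in_set.
clearbody X R.
have inR : forall y, y \notin G1 -> y \notin G2 -> y \in R.
  by move=> y h1 h2; rewrite memR h1 h2.
have H1 : forall x y, e x y -> x \in X -> y \in X.
  move=> x y exy; rewrite !memX => /orP [xG1 | /andP [xR /existsP [a /existsP [b /and3P [ac bG eab]]]]].
    case: (boolP (y \in G1)) => [yG | yG1]; first by apply/orP; left.
    case: (boolP (y \in G2)) => [yG2 | yG2]; first by move: (noE _ _ xG1 yG2); rewrite exy.
    apply/orP; right; rewrite inR //=.
    apply/existsP; exists y; apply/existsP; exists x.
    by rewrite inE connect0 xG1 se.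
  case: (boolP (y \in G1)) => [yG | yG1]; first by apply/orP; left.
  case: (boolP (y \in G2)) => [yG2 | yG2].
    move: (Hn x); rewrite xR /=.
    have -> : adj x G1 by apply/existsP; exists a; apply/existsP; exists b; rewrite ac bG eab.
    have -> // : adj x G2.
    by apply/existsP; exists x; apply/existsP; exists y; rewrite inE connect0 yG2 exy.
  have yR := inR y yG1 yG2.
  apply/orP; right; rewrite yR /=.
  apply/existsP; exists a; apply/existsP; exists b; rewrite bG eab andbT.
  rewrite andbT inE; apply: connect_trans (_ : connect (eR R) y x) _; last by move: ac; rewrite inE.
  by apply: connect1; rewrite /eR /= se exy yR xR.
have Hcl : closed e X.
  by move=> a b eab; apply/idP/idP; [exact: H1 | apply: H1; rewrite se].
have := closed_connect Hcl (conn g1 g2).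
rewrite (memX g1) (memX g2) g1G (disjointFl dj g2G) (memR g2) g2G /= andbF.
by [].
Qed.

End Graph.

Lemma goodform n (w : lvec n) a : -2 <= hq w -> 0 < w a ->
  exists (a : 'I_n) (J : {set 'I_n}), a \notin J /\ w = Ebas a - \sum_(j in J) Ebas j.
Proof.
move=> hw wa; have [wa1 Hj] := formA hw wa.
exists a, [set j | w j == -1]; split; first by rewrite inE wa1.
apply/ffunP => i; rewrite !ffunE sum_ffunE.
rewrite (eq_bigr (fun j => ((i == j) : nat)%:Z)); last by move=> j _; rewrite ffunE.
case: (eqVneq i a) => [-> | ia].
  rewrite big1 ?subr0 ?wa1 //= => j; rewrite inE => /eqP wj.
  by case: (eqVneq a j) => // aj; rewrite -aj wa1 in wj.
rewrite (_ : \sum_(j in [set j | w j == -1]) ((i == j) : nat)%:Z = ((w i == -1) : nat)%:Z).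
  by case: (Hj i ia) => ->.
case: (boolP (w i == -1)) => wi.
  rewrite (bigD1 i) ?inE //= eqxx big1 ?addr0 // => j /andP [_ ji].
  by rewrite eq_sym (negbTE ji).
rewrite big1 // => j; rewrite inE => wj; case: (eqVneq i j) => // ij.
by rewrite ij wj in wi.
Qed.

Lemma L1 (p q : int) : p * q < 0 -> q <= 0 -> 0 < p /\ q < 0.
Proof. move=> h1 h2; case: (lerP p 0) => hp; nia. Qed.
Lemma L2 (p q : int) : p < 0 -> q < 0 -> p * q = 0 -> False.
Proof. move=> h1 h2 h3; nia. Qed.
Lemma L3 (z : int) : 1 <= - z -> 0 <= z -> False.
Proof. lia. Qed.
Lemma L4 (z : int) : 0 <= - z -> 1 <= z -> False.
Proof. lia. Qed.

Theorem corollary3p5 (V : finType) (e : rel V) (d : V -> int) (n : nat)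
    (phi : V -> lvec n) (G1 G2 : {set V}) :
  (1 <= n)%N -> #|V| = n ->
  is_tree e -> minimal_dec d ->
  symplectic_embedding e d phi ->
  connected_subtree e G1 -> connected_subtree e G2 ->
  [disjoint G1 & G2] ->
  exists k : bool,
    exists (a : 'I_n) (J : {set 'I_n}),
      a \notin J /\
      \sum_(v in (if k then G1 else G2)) phi v = Ebas a - \sum_(j in J) Ebas j.
Proof.
move=> _ _ [_ se _ conn _] _ [Hadj _ Hk] [G1n G1c] [G2n G2c] dj.
have hG : forall G : {set V}, G != set0 ->
   (forall x y, x \in G -> y \in G -> connect [rel a b | [&& e a b, a \in G & b \in G]] x y) ->
   -2 <= hq (wS phi G).
  move=> G Gn Gc; have [r rG] := set0Pn _ Gn.
  apply: (@conn_hq V e n phi se Hadj Hk G [rel a b | [&& e a b, a \in G & b \in G]] r) => //.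
  - by move=> a b /=; rewrite se; case: (a \in G); case: (b \in G); rewrite ?andbF.
  - by move=> a b /and3P [].
  - by move=> a b /and3P [].
  - by move=> y yG; apply: Gc.
have h1 := hG _ G1n G1c; have h2 := hG _ G2n G2c.
case: (boolP [exists a, 0 < wS phi G1 a]) => [/existsP [a Ha] | N1].
  by exists true; apply: (goodform h1 Ha).
case: (boolP [exists a, 0 < wS phi G2 a]) => [/existsP [a Ha] | N2].
  by exists false; apply: (goodform h2 Ha).
exfalso.
set w1 := wS phi G1; set w2 := wS phi G2.
have n1 : forall i, w1 i <= 0.
  by move=> i; move: N1; rewrite negb_exists => /forallP /(_ i); rewrite -leNgt.
have n2 : forall i, w2 i <= 0.
  by move=> i; move: N2; rewrite negb_exists => /forallP /(_ i); rewrite -leNgt.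
have Q12 := QnAB Hadj dj; rewrite -/w1 -/w2 in Q12.
have s0 : 0 <= \sum_(i < n) w1 i * w2 i by apply: sumr_ge0 => i _; apply: mulr_le0.
have sE : \sum_(i < n) w1 i * w2 i = - EE e G1 G2 by rewrite -Q12 /Qn opprK.
have prod0 : forall i, w1 i * w2 i = 0.
  have hh : \sum_(i < n) w1 i * w2 i = 0.
    apply/eqP; rewrite eq_le s0 andbT sE oppr_le0; exact: EE_ge0.
  move=> i; apply: (psumr_eq0P _ hh) => // j _; exact: mulr_le0.
have noE : forall a b, a \in G1 -> b \in G2 -> ~~ e a b.
  move=> a b aG bG; apply/negP => eab.
  move: s0; rewrite sE => s0; exact: L4 s0 (EE_ge1 aG bG eab).
have [g1 g1G] := set0Pn _ G1n; have [g2 g2G] := set0Pn _ G2n.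
have [x [xR [a [b [ac bG eab]]] [a' [b' [ac' bG' eab']]]]] := find_comp se conn g1G g2G dj noE.
set C := comp e _ x in ac ac'.
have hC : -2 <= hq (wS phi C) by apply: comp_hq.
have CR := comp_sub e xR; rewrite -/C in CR.
have djC : forall G : {set V}, G \subset G1 :|: G2 -> [disjoint C & G].
  move=> G GG; rewrite disjoint_subset; apply: subset_trans CR _.
  apply/subsetP => z; rewrite !inE negb_or => /andP [z1 z2]; apply/negP => zG; by move: (subsetP GG z zG); rewrite inE (negbTE z1) (negbTE z2).
have pos : forall (GX : {set V}) (w : lvec n) a b, GX \subset G1 :|: G2 -> w = wS phi GX ->
    (forall i, w i <= 0) -> a \in C -> b \in GX -> e a b ->
    exists i, 0 < wS phi C i /\ w i < 0.
  move=> GX w a0 b0 HGX -> wn aC bG0 e0.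
  have QC := QnAB Hadj (djC GX HGX).
  have := EE_ge1 aC bG0 e0; rewrite -QC /Qn => H.
  case: (boolP [exists i, wS phi C i * wS phi GX i < 0]) => [/existsP [i Hi] | Nn].
    by exists i; apply: L1 Hi (wn i).
  have : 0 <= \sum_(i < n) wS phi C i * wS phi GX i.
    apply: sumr_ge0 => i _; move: Nn; rewrite negb_exists => /forallP /(_ i).
    by rewrite -leNgt.
  move=> hs; exfalso; exact: L3 H hs.
have [i [ci wi]] := pos G1 w1 a b (subsetUl _ _) erefl n1 ac bG eab.
have [j [cj wj]] := pos G2 w2 a' b' (subsetUr _ _) erefl n2 ac' bG' eab'.
have [_ Hj] := formA hC ci.
case: (eqVneq j i) => [ji | ji].
  rewrite ji in wj; exact: L2 wi wj (prod0 i).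
by case: (Hj j ji) => Hc; rewrite Hc in cj.
Qed.
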